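(* For the sequences generated by Algorithm IRG (with any stepsize rule), the direction sequence $\{d^k\}$ is gradient associated with $\{x^k\}$.
   Context: Algorithm IRG (general inexact reduced gradient framework). Let $f:\mathbb R^n\to\mathbb R$ be continuously differentiable. Parameters: initial point $x^1\in\mathbb R^n$, initial radii $\varepsilon_1>0$, $r_1>0$, reduction factors $\mu,\theta\in(0,1)$, and a sequence $\{\rho_k\}$ of positive numbers. For $k=1,2,\dots$: (1) choose $g^k\in\mathbb R^n$ with $\|g^k-\nabla f(x^k)\|\le\min\{\varepsilon_k,\rho_k\}$; (2) if $\|g^k\|\le r_k+\varepsilon_k$, set $r_{k+1}=\mu r_k$, $\varepsilon_{k+1}=\theta\varepsilon_k$, $d^k=0$; otherwise set $r_{k+1}=r_k$, $\varepsilon_{k+1}=\varepsilon_k$ and $d^k=-\frac{\|g^k\|-\varepsilon_k}{\|g^k\|}g^k$; (3) choose a stepsize $t_k>0$ by some rule; (4) set $x^{k+1}=x^k+t_kd^k$. A direction sequence $\{d^k\}$ is called gradient associated with $\{x^k\}$ if for every infinite set $J\subset\mathbb N$, $d^k\to0$ along $J$ implies $\nabla f(x^k)\to 0$ along $J$. *)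

(* Defs.v *)
From HB Require Import structures.
From mathcomp Require Import all_boot all_order all_algebra.
From mathcomp Require Import all_classical all_reals all_analysis.
Set Implicit Arguments. Unset Strict Implicit. Unset Printing Implicit Defensive.
Import Order.TTheory GRing.Theory Num.Theory.
Import numFieldNormedType.Exports.
Local Open Scope classical_set_scope.
Local Open Scope ring_scope.

Definition dotv (R : realType) (n : nat) (u v : 'rV[R]_n) : R :=
  \sum_(i < n) u ord0 i * v ord0 i.

Definition enorm (R : realType) (n : nat) (v : 'rV[R]_n) : R :=
  Num.sqrt (dotv v v).

Definition C1_with_gradient (R : realType) (n : nat)
  (f : 'rV[R]_n -> R) (gradf : 'rV[R]_n -> 'rV[R]_n) : Prop :=
  (forall x, differentiable f x) /\
  (forall x, ('d f x : 'rV[R]_n -> R) = (fun h => dotv (gradf x) h)) /\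
  continuous gradf.

Definition cvg0_along (R : realType) (n : nat) (J : set nat)
  (u : nat -> 'rV[R]_n) : Prop :=
  forall e : R, 0 < e ->
    exists N : nat, forall k, J k -> (N <= k)%N -> enorm (u k) < e.

Definition gradient_associated (R : realType) (n : nat)
  (gradf : 'rV[R]_n -> 'rV[R]_n) (x d : nat -> 'rV[R]_n) : Prop :=
  forall J : set nat, infinite_set J ->
    cvg0_along J d -> cvg0_along J (fun k => gradf (x k)).

(* The sequences (x, g, d, eps, r, t) are generated by Algorithm IRG
   (iterations indexed from 0 instead of 1). *)
Definition IRG_run (R : realType) (n : nat)
  (gradf : 'rV[R]_n -> 'rV[R]_n) (mu theta : R) (rho : nat -> R)
  (x g d : nat -> 'rV[R]_n) (eps r t : nat -> R) : Prop :=
  forall k : nat,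
    enorm (g k - gradf (x k)) <= Num.min (eps k) (rho k) /\
    (if enorm (g k) <= r k + eps k then
       [/\ r k.+1 = mu * r k, eps k.+1 = theta * eps k & d k = 0]
     else
       [/\ r k.+1 = r k, eps k.+1 = eps k &
           d k = - ((enorm (g k) - eps k) / enorm (g k)) *: g k]) /\
    0 < t k /\
    x k.+1 = x k + t k *: d k.

(* Main.v *)
Require Import Defs.
From HB Require Import structures.
From mathcomp Require Import all_boot all_order all_algebra.
From mathcomp Require Import all_classical all_reals all_analysis.
From mathcomp Require Import ring lra.
Import Order.TTheory GRing.Theory Num.Theory.
Import numFieldNormedType.Exports.
Local Open Scope classical_set_scope.
Local Open Scope ring_scope.

Section Aux.
Variables (R : realType) (n : nat).
Implicit Types u v : 'rV[R]_n.

Lemma dotv_ge0 v : 0 <= dotv v v.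
Proof. by apply: sumr_ge0 => i _; rewrite -expr2 sqr_ge0. Qed.

Lemma enorm_ge0 v : 0 <= enorm v.
Proof. exact: sqrtr_ge0. Qed.

Lemma enorm_sq v : enorm v ^+ 2 = dotv v v.
Proof. by rewrite /enorm sqr_sqrtr // dotv_ge0. Qed.

Lemma enormZ (c : R) v : enorm (c *: v) = `|c| * enorm v.
Proof.
rewrite /enorm /dotv.
have -> : \sum_(i < n) (c *: v) ord0 i * (c *: v) ord0 i
   = c ^+ 2 * \sum_(i < n) v ord0 i * v ord0 i.
  by rewrite mulr_sumr; apply: eq_bigr => i _; rewrite !mxE; ring.
by rewrite sqrtrM ?sqr_ge0 // sqrtr_sqr.
Qed.

Lemma dotv_add u v : dotv (u + v) (u + v) <= 2 * (dotv u u + dotv v v).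
Proof.
rewrite /dotv -big_split mulr_sumr /=; apply: ler_sum => i _; rewrite !mxE.
have := @sqr_ge0 R (u ord0 i - v ord0 i); rewrite !expr2; nra.
Qed.

Lemma sq_le (a b : R) : 0 <= a -> 0 <= b -> a ^+ 2 <= b ^+ 2 -> a <= b.
Proof. move=> ha hb h; rewrite !expr2 in h; nra. Qed.

Lemma enorm_tri u v : enorm (u + v) <= 2 * (enorm u + enorm v).
Proof.
apply: sq_le; [exact: enorm_ge0| |].
  by rewrite mulr_ge0 // addr_ge0 // enorm_ge0.
rewrite !enorm_sq (le_trans (dotv_add u v)) //.
rewrite -!enorm_sq; have := enorm_ge0 u; have := enorm_ge0 v.
set a := enorm u; set b := enorm v => hb ha; rewrite !expr2; nra.
Qed.

End Aux.
Theorem mainTheorem8 (R : realType) (n : nat)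
  (f : 'rV[R]_n -> R) (gradf : 'rV[R]_n -> 'rV[R]_n)
  (mu theta : R) (rho : nat -> R)
  (x g d : nat -> 'rV[R]_n) (eps r t : nat -> R) :
  C1_with_gradient f gradf ->
  0 < eps 0%N -> 0 < r 0%N ->
  0 < mu < 1 -> 0 < theta < 1 ->
  (forall k, 0 < rho k) ->
  IRG_run gradf mu theta rho x g d eps r t ->
  gradient_associated gradf x d.
Proof.
move=> _ e0 r0 /andP[mu0 mu1] /andP[th0 th1] _ H.
have step : forall k, (enorm (g k) <= r k + eps k ->
   [/\ r k.+1 = mu * r k, eps k.+1 = theta * eps k & d k = 0]) /\
   (~~ (enorm (g k) <= r k + eps k) -> [/\ r k.+1 = r k, eps k.+1 = eps k &
           d k = - ((enorm (g k) - eps k) / enorm (g k)) *: g k]).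
  move=> k; have [_ [+ _]] := H k.
  by case: ifP => hb hh; split => // hb'; rewrite hb' in hb.
have pos : forall k, 0 < eps k /\ 0 < r k.
  elim=> [|k [ek rk]]; first by [].
  have [h1 h2] := step k.
  case: (boolP (enorm (g k) <= r k + eps k)) => hb.
    by case: (h1 hb) => -> -> _; split; apply: mulr_gt0.
  by case: (h2 hb) => -> -> _.
have mono : forall k, eps k.+1 <= eps k /\ r k.+1 <= r k.
  move=> k; have [ek rk] := pos k; have [h1 h2] := step k.
  case: (boolP (enorm (g k) <= r k + eps k)) => hb.
    by case: (h1 hb) => -> -> _; split; nra.
  by case: (h2 hb) => -> -> _.
have monoN : forall k j, eps (k + j)%N <= eps k /\ r (k + j)%N <= r k.
  move=> k; elim=> [|j [IH1 IH2]]; first by rewrite addn0.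
  rewrite addnS; have [m1 m2] := mono (k + j)%N.
  by split; [exact: le_trans m1 IH1 | exact: le_trans m2 IH2].
have monoL : forall k l, (k <= l)%N -> eps l <= eps k /\ r l <= r k.
  by move=> k l kl; rewrite -(subnKC kl); apply: monoN.
have nonnull : forall k, ~~ (enorm (g k) <= r k + eps k) -> r k < enorm (d k).
  move=> k hb; have [ek rk] := pos k; have [_ h2] := step k.
  case: (h2 hb) => _ _ ->.
  rewrite -ltNge in hb.
  have gpos : 0 < enorm (g k) by lra.
  rewrite enormZ normrN ger0_norm; last by apply: divr_ge0; lra.
  rewrite divfK; first by lra.
  by rewrite gt_eqF.
have bound : forall k,
    enorm (gradf (x k)) <= 2 * (enorm (d k) + r k + 2 * eps k).
  move=> k; have [ek rk] := pos k; have [h1 h2] := step k.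
  have [Hg _] := H k.
  have he : enorm (g k - gradf (x k)) <= eps k.
    by apply: (le_trans Hg); rewrite ge_min lexx.
  have hgd : enorm (g k) <= enorm (d k) + r k + eps k.
    case: (boolP (enorm (g k) <= r k + eps k)) => hb.
      by case: (h1 hb) => _ _ ->; have := @enorm_ge0 R n 0; lra.
    have hr := nonnull k hb.
    case: (h2 hb) => _ _ hd.
    rewrite -ltNge in hb.
    have gpos : 0 < enorm (g k) by lra.
    have : enorm (d k) = enorm (g k) - eps k.
      rewrite hd enormZ normrN ger0_norm; last by apply: divr_ge0; lra.
      by rewrite divfK // gt_eqF.
    lra.
  have -> : gradf (x k) = g k + (-1) *: (g k - gradf (x k)).
    by rewrite scaleN1r opprB addrC subrK.
  apply: (le_trans (@enorm_tri R n _ _)); rewrite enormZ normrN normr1 mul1r.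
  lra.
have Jbig : forall J : set nat, infinite_set J ->
    forall M, exists k, J k /\ (M <= k)%N.
  move=> J HJ M; apply: contrapT => hM; apply: HJ.
  apply: (sub_finite_set _ (finite_II M)) => k Jk /=.
  rewrite ltnNge; apply/negP => Mk; apply: hM; by exists k.
move=> J HJ Hd e epos.
case: (pselect (exists K, forall k, (K <= k)%N ->
                    ~~ (enorm (g k) <= r k + eps k))).
  case=> K HK.
  have rc : forall j, r (K + j)%N = r K.
    elim=> [|j IH]; first by rewrite addn0.
    rewrite addnS; have [_ h2] := step (K + j)%N.
    by case: (h2 (HK _ (leq_addr _ _))) => -> _ _.
  have [_ rK] := pos K.
  have [N HN] := Hd (r K) rK.
  have [k [Jk kN]] := Jbig J HJ (maxn N K).
  rewrite geq_max in kN; case/andP: kN => Nk Kk.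
  have h1 := HN k Jk Nk.
  have h2 := nonnull k (HK k Kk).
  have rk : r k = r K by rewrite -(subnKC Kk) rc.
  by rewrite rk in h2; lra.
move=> Hn.
have Hno : forall K, exists k, (K <= k)%N /\ enorm (g k) <= r k + eps k.
  move=> K; apply: contrapT => hK; apply: Hn; exists K => k Kk.
  apply/negP => hk; apply: hK; by exists k.
have geo : forall m, exists K, r K <= mu ^+ m * r 0%N /\
                                 eps K <= theta ^+ m * eps 0%N.
  elim=> [|m [K [h1 h2]]]; first by exists 0%N; rewrite !expr0 !mul1r.
  have [k [Kk hk]] := Hno K.
  have [m1 m2] := monoL K k Kk.
  have [s1 s2] := (step k).1 hk.
  exists k.+1; rewrite s1 s2 !exprS -!mulrA; split.
    by rewrite ler_pM2l //; apply: le_trans m2 h1.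
  by rewrite ler_pM2l //; apply: le_trans m1 h2.
have mu_lt : `|mu| < 1 by rewrite ger0_norm //; lra.
have th_lt : `|theta| < 1 by rewrite ger0_norm //; lra.
have c1 : 0 < e / (8 * r 0%N) by apply: divr_gt0 => //; lra.
have c2 : 0 < e / (16 * eps 0%N) by apply: divr_gt0 => //; lra.
have := cvgr0_norm_lt _ (cvg_expr mu_lt) _ c1.
case=> M1 _ HM1.
have := cvgr0_norm_lt _ (cvg_expr th_lt) _ c2.
case=> M2 _ HM2.
have [K [hK1 hK2]] := geo (maxn M1 M2).
have q1 := HM1 (maxn M1 M2) (leq_maxl _ _).
have q2 := HM2 (maxn M1 M2) (leq_maxr _ _).
have {q1} q1 : mu ^+ (maxn M1 M2) * r 0%N < e / 8.
  move: q1 => /=; rewrite ger0_norm ?exprn_ge0 ?ltW //.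
  rewrite ltr_pdivlMr; last lra.
  rewrite ltr_pdivlMr; last lra. lra.
have {q2} q2 : theta ^+ (maxn M1 M2) * eps 0%N < e / 16.
  move: q2 => /=; rewrite ger0_norm ?exprn_ge0 ?ltW //.
  rewrite ltr_pdivlMr; last lra.
  rewrite ltr_pdivlMr; last lra. lra.
have [N HN] := Hd (e / 4) ltac:(lra).
exists (maxn N K) => k Jk; rewrite geq_max => /andP[Nk Kk].
have b := bound k.
have hd := HN k Jk Nk.
have [m1 m2] := monoL K k Kk.
lra.
Qed.
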